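(* Let $X$ and $Y$ be independent random variables such that, for the same $D>0$ and $\sigma^2>0$, $\mathbb{P}(|X|\ge x)\le De^{-x^2/(2\sigma^2)}$ and $\mathbb{P}(|Y|\ge x)\le De^{-x^2/(2\sigma^2)}$ for every $x>0$. Then for every $z>0$ and $k>0$, $$\mathbb{P}(X+Y\ge z)\le\big(1+D\sqrt{k/e}\sqrt{2\pi}\big)^2e^{-\frac{z^2}{4(1+1/k)\sigma^2}}.$$ *)

(* Defs.v *)
From HB Require Import structures.
From mathcomp Require Import all_boot all_order all_algebra.
From mathcomp Require Import all_classical all_reals all_analysis.
Set Implicit Arguments. Unset Strict Implicit. Unset Printing Implicit Defensive.
Import Order.TTheory GRing.Theory Num.Theory.
Local Open Scope classical_set_scope.
Local Open Scope ring_scope.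

Definition indep2 d (T : measurableType d) (R : realType) (P : probability T R)
  (X Y : {RV P >-> R}) : Prop :=
  forall A B : set R, measurable A -> measurable B ->
    P (X @^-1` A `&` Y @^-1` B) = (P (X @^-1` A) * P (Y @^-1` B))%E.

(* Main.v *)
Require Import Defs.
From HB Require Import structures.
From mathcomp Require Import all_boot all_order all_algebra.
From mathcomp Require Import all_classical all_reals all_analysis.
From mathcomp Require Import measurable_realfun.
From mathcomp Require Import ring lra.
Import Order.TTheory GRing.Theory Num.Theory.
Import numFieldNormedType.Exports.
Local Open Scope classical_set_scope.
Local Open Scope ring_scope.

Module Helpers.
Set Implicit Arguments. Unset Strict Implicit. Unset Printing Implicit Defensive.
Section S.
Context {R : realType}.
Local Notation mu := (@lebesgue_measure R).
Lemma expderiv (l x : R) : is_derive x 1 (fun t => expR (l * t)) (l * expR (l * x)).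
Proof. by apply: is_derive_eq; rewrite mulrC scaler1. Qed.

Lemma cont_expl (l : R) : continuous (fun t : R => expR (l * t)).
Proof.
move=> x; apply: (@continuous_comp _ _ _ ( *%R l) expR); last exact: continuous_expR.
exact: (@continuousM _ _ (cst l) id x (cvg_cst _) cvg_id).
Qed.

Lemma cont_lexp (l : R) : continuous (fun t : R => l * expR (l * t)).
Proof.
move=> x.
have h1 : {for x, continuous (cst l : R -> R)} by exact: cvg_cst.
have h2 : {for x, continuous (fun t : R => expR (l * t))} by exact: cont_expl.
exact: (continuousM h1 h2).
Qed.

Lemma int_lexp (l a : R) : 0 <= a ->
  (\int[mu]_(t in `]0%R, a]) (l * expR (l * t))%:E = (expR (l * a) - 1)%:E)%E.
Proof.
move=> a0; rewrite le_eqVlt in a0; case/orP: a0 => [/eqP<-|a0].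
  rewrite set_itv_ge ?integral_set0 ?mulr0 ?expR0 ?subrr//.
  by rewrite ltxx.
rewrite (@integral_itv_obnd_cbnd _ 0 (BRight a) (fun t => (l * expR (l * t))%:E)); last first.
  apply/measurable_EFinP; apply: measurable_funTS.
  by apply: continuous_measurable_fun; exact: cont_lexp.
rewrite (@continuous_FTC2 _ _ (fun t => expR (l * t))) //.
- by rewrite mulr0 expR0 EFinB.
- by apply: continuous_subspaceT; exact: cont_lexp.
- split.
  + by move=> x _; apply: ex_derive; exact: expderiv.
  + by apply: cvg_at_right_filter; exact: cont_expl.
  + by apply: cvg_at_left_filter; exact: cont_expl.
- move=> x _; rewrite derive1E; exact: (@derive_val _ _ _ _ _ _ _ (expderiv l x)).
Qed.
End S.
Section B.
Context d (T : measurableType d) (R : realType) (P : probability T R).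
Local Notation mu := (@lebesgue_measure R).
Variables (Z : T -> R) (mZ : measurable_fun setT Z) (D s2 l : R).
Hypotheses (hs : 0 < s2) (hl : 0 < l) (hD : 0 < D).
Hypothesis hZ : forall x, 0 < x ->
  (P [set w | (x <= `|Z w|)%R] <= (D * expR (- (x ^+ 2) / (2 * s2)))%:E)%E.

Let S := [set p : T * R | 0 < p.2] `&` [set p | p.2 <= `|Z p.1|].
Let h (p : T * R) := (l * expR (l * p.2) * \1_S p)%:E.

Let mS : measurable S.
Proof.
apply: measurableI.
  rewrite [X in measurable X](_ : _ = setT `&` snd @^-1` `]0, +oo[); last first.
    by apply/seteqP; split => p /=; rewrite in_itv/= andbT; [move=> ?|move=> []].
  have H := @measurable_snd _ _ T R; apply: H; [exact: measurableT|exact: measurable_itv].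
rewrite -[X in measurable X]setTI.
have H := @measurable_fun_le _ (T * R)%type R setT snd (fun p => `|Z p.1|).
refine (H measurableT (@measurable_snd _ _ T R) _).
apply: measurableT_comp => //.
exact: measurableT_comp.
Qed.

Let mh : measurable_fun setT h.
Proof.
apply/measurable_EFinP; apply: measurable_funM.
  exact (measurableT_comp (continuous_measurable_fun (@cont_lexp R l)) (@measurable_snd _ _ T R)).
exact: measurable_indic.
Qed.

Let h0 p : (0 <= h p)%E.
Proof. by rewrite lee_fin mulr_ge0 ?indicE// mulr_ge0 ?expR_ge0// ltW. Qed.

Let inner w : (expR (l * `|Z w|))%:E = (1 + \int[mu]_t h (w, t))%E.
Proof.
have -> : (\int[mu]_t h (w, t) = \int[mu]_(t in `]0%R, (`|Z w|)%R]) (l * expR (l * t))%:E)%E.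
  rewrite [in RHS]integral_mkcond; apply: eq_integral => t _ /=.
  rewrite /h /patch indicE.
  have [H|H] := pselect (0 < t /\ t <= `|Z w|).
    rewrite mem_set; last by [].
    by rewrite mem_set ?mulr1 //= in_itv/=; apply/andP.
  rewrite memNset; last by [].
  rewrite memNset ?mulr0// /= in_itv/=; by move/andP.
by rewrite int_lexp// -EFinD addrC subrK.
Qed.

Let g t := (D * l * expR (l * t) * expR (- t ^+ 2 / (2 * s2)))%:E.

Let outer t : (\int[P]_w h (w, t) <= g t)%E.
Proof.
have [t0|t0] := leP t 0.
  rewrite integral0_eq; last first.
    move=> w _; rewrite /h indicE memNset ?mulr0// => -[/= tp _].
    by move: t0; rewrite leNgt tp.
  by rewrite /g lee_fin !mulr_ge0 ?expR_ge0 // ltW.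
have mA : measurable [set w | (t <= `|Z w|)%R].
  rewrite -[X in measurable X]setTI.
  have H := @measurable_fun_le _ T R setT (cst t) (fun w => `|Z w|).
  refine (H measurableT (measurable_cst _) _).
  exact: measurableT_comp.
have -> : (\int[P]_w h (w, t) = \int[P]_w ((l * expR (l * t))%:E * (\1_[set w | (t <= `|Z w|)%R] w)%:E))%E.
  apply: eq_integral => w _; rewrite /h -EFinM !indicE.
  have [H|H] := pselect (t <= `|Z w|).
    rewrite mem_set; last by split.
    by rewrite mem_set.
  rewrite memNset; last by move=> [].
  by rewrite memNset.
rewrite (ge0_integralZl_EFin _ measurableT); first last.
- by rewrite mulr_ge0 ?expR_ge0// ltW.
- by apply/measurable_EFinP; exact: measurable_indic.
- by move=> w _; rewrite lee_fin.
rewrite integral_indic // setIT /g.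
have -> : D * l * expR (l * t) * expR (- t ^+ 2 / (2 * s2)) =
  (l * expR (l * t)) * (D * expR (- t ^+ 2 / (2 * s2))) by ring.
rewrite [X in (_ <= X)%E]EFinM; apply: lee_pmul => //; first by rewrite lee_fin mulr_ge0 ?expR_ge0// ltW.
exact: hZ.
Qed.

Let K := D * l * Num.sqrt (2 * pi * s2) * expR (l ^+ 2 * s2 / 2).

Let gE : g = fun t => (K * normal_pdf (l * s2) (Num.sqrt s2) t)%:E.
Proof.
apply: funext => t; rewrite /g normal_pdfE; last by rewrite sqrtr_eq0 -ltNge.
rewrite /normal_peak /normal_fun sqr_sqrtr ?ltW//; congr EFin.
have q0 : Num.sqrt (2 * pi * s2) != 0.
  by rewrite sqrtr_eq0 -ltNge; apply: mulr_gt0 => //; apply: mulr_gt0 => //; exact: pi_gt0.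
have -> : s2 * pi *+ 2 = 2 * pi * s2 by rewrite mulr2n; ring.
have s0 : s2 != 0 by rewrite gt_eqF.
have E : l * t + - t ^+ 2 / (2 * s2) = l ^+ 2 * s2 / 2 + - (t - l * s2) ^+ 2 / (s2 *+ 2).
  by rewrite mulr2n; field.
rewrite /K.
transitivity (D * l * (expR (l ^+ 2 * s2 / 2) * expR (- (t - l * s2) ^+ 2 / (s2 *+ 2)))); last by field.
by rewrite -expRD -E expRD mulrA.
Qed.

Lemma mgf_abs : (\int[P]_w (expR (l * `|Z w|))%:E <=
  (1 + K)%:E)%E.
Proof.
under eq_integral do rewrite inner.
rewrite ge0_integralD //; last 2 first.
- by move=> w _; apply: integral_ge0 => t _; exact: h0.
- exact (@measurable_fun_fubini_tonelli_F _ _ _ _ _ mu h mh h0).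
rewrite integral_cst //.
rewrite [X in (1 * X + _)%E](_ : _ = 1%E) ?mul1e; last exact: probability_setT.
rewrite (@fubini_tonelli _ _ _ _ _ P mu h mh h0) /=.
have K0 : 0 <= K by rewrite /K !mulr_ge0 ?sqrtr_ge0 ?expR_ge0// ltW.
have mg : measurable_fun setT g.
  rewrite gE; apply/measurable_EFinP; apply: measurable_funM.
    exact: measurable_cst.
  exact: measurable_normal_pdf.
rewrite EFinD; apply: leeD2l.
apply: (@le_trans _ _ (\int[mu]_y g y)%E).
  apply: ge0_le_integral => //.
  - by move=> y _; apply: integral_ge0 => x _; exact: h0.
  - exact (@measurable_fun_fubini_tonelli_G _ _ _ _ _ P h mh h0).
rewrite gE.
under eq_integral do rewrite EFinM.
rewrite ge0_integralZl_EFin //; last 2 first.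
- by move=> y _; rewrite lee_fin normal_pdf_ge0.
- by apply/measurable_EFinP; exact: measurable_normal_pdf.
by rewrite integral_normal_pdf mule1.
Qed.

End B.
Section C.
Context d (T : measurableType d) (R : realType) (P : probability T R).
Variables (X Y : {RV P >-> R}).
Hypothesis hXY : forall A B : set R, measurable A -> measurable B ->
    P (X @^-1` A `&` Y @^-1` B) = (P (X @^-1` A) * P (Y @^-1` B))%E.

Let mXY : measurable_fun setT (fun w => (X w, Y w)).
Proof. by apply/measurable_fun_pairP; split. Qed.

Let XY : {mfun T >-> (R * R)%type} :=
  HB.pack (fun w => (X w, Y w)) (isMeasurableFun.Build _ _ _ _ _ mXY).

Let J := distribution P XY.
Let muX := distribution P X.
Let muY := distribution P Y.

Let JE : forall A : set (R * R), measurable A -> (muX \x muY)%E A = J A.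
Proof.
apply: product_measure_unique => A B mA mB.
exact: (hXY mA mB).
Qed.

Variable F G : R -> R.
Hypotheses (mF : measurable_fun setT F) (mG : measurable_fun setT G).
Hypotheses (F0 : forall x, 0 <= F x) (G0 : forall x, 0 <= G x).

Lemma indep_prod :
  (\int[P]_w (F (X w) * G (Y w))%:E =
   \int[P]_w (F (X w))%:E * \int[P]_w (G (Y w))%:E)%E.
Proof.
pose f (p : R * R) := (F p.1 * G p.2)%:E.
have mf : measurable_fun setT f.
  apply/measurable_EFinP; apply: measurable_funM.
    exact (measurableT_comp mF (@measurable_fst _ _ R R)).
  exact (measurableT_comp mG (@measurable_snd _ _ R R)).
have f0 p : (0 <= f p)%E by rewrite lee_fin mulr_ge0.
have -> : (\int[P]_w (F (X w) * G (Y w))%:E = \int[J]_p f p)%E.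
  by rewrite ge0_integral_distribution.
rewrite -(eq_measure_integral _ (fun A mA _ => JE mA)).
rewrite (fubini_tonelli1 f mf f0) /fubini_F /f /=.
have mEF : measurable_fun setT (EFin \o F) by apply/measurable_EFinP.
have mEG : measurable_fun setT (EFin \o G) by apply/measurable_EFinP.
transitivity (\int[distribution P X]_x ((F x)%:E * \int[distribution P Y]_y (G y)%:E))%E.
  apply: eq_integral => x _; under eq_integral do rewrite EFinM.
  rewrite ge0_integralZl_EFin //.
  by move=> y _; rewrite lee_fin.
rewrite (ge0_integralZr _ measurableT mEF); last 2 first.
- by move=> x _; rewrite lee_fin.
- by apply: integral_ge0 => y _; rewrite lee_fin.
by rewrite !ge0_integral_distribution.
Qed.
End C.
Lemma key_ineq (R : realType) (k u : R) : 0 < k -> 0 <= u ->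
  u <= Num.sqrt (k / expR 1) * expR (u ^+ 2 / (2 * k)).
Proof.
move=> k0 u0.
have e0 : 0 < expR 1 :> R by exact: expR_gt0.
have -> : Num.sqrt (k / expR 1) * expR (u ^+ 2 / (2 * k)) =
    Num.sqrt (k / expR 1 * expR (u ^+ 2 / k)).
  rewrite [RHS]sqrtrM ?divr_ge0 ?ltW//; congr (_ * _).
  have -> : u ^+ 2 / k = u ^+ 2 / (2 * k) * 2%:R by field; rewrite gt_eqF.
  by rewrite expRM_natr sqrtr_sqr ger0_norm ?expR_ge0.
rewrite -[leLHS]ger0_norm// -sqrtr_sqr ler_sqrt; last first.
  by rewrite mulr_ge0 ?expR_ge0// divr_ge0// ltW.
have h := expR_ge1Dx (u ^+ 2 / k - 1).
rewrite addrC subrK expRB in h.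
have -> : k / expR 1 * expR (u ^+ 2 / k) = k * (expR (u ^+ 2 / k) / expR 1) by ring.
rewrite {1}(_ : u ^+ 2 = k * (u ^+ 2 / k)); last by field; rewrite gt_eqF.
by rewrite ler_wpM2l// ltW.
Qed.

End Helpers.
Import Helpers.

Theorem lemmaA3 (d : measure_display) (T : measurableType d) (R : realType)
  (P : probability T R) (X Y : {RV P >-> R}) (D sigma2 : R)
  (hD : 0 < D) (hs : 0 < sigma2) (hXY : indep2 X Y)
  (hX : forall x : R, 0 < x ->
     (P [set w | (x <= `|X w|)%R] <= (D * expR (- (x ^+ 2) / (2 * sigma2)))%:E)%E)
  (hY : forall x : R, 0 < x ->
     (P [set w | (x <= `|Y w|)%R] <= (D * expR (- (x ^+ 2) / (2 * sigma2)))%:E)%E) :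
  forall z k : R, 0 < z -> 0 < k ->
    (P [set w | (z <= X w + Y w)%R] <=
     ((1 + D * Num.sqrt (k / expR 1) * Num.sqrt (2 * pi)) ^+ 2
        * expR (- (z ^+ 2) / (4 * (1 + k^-1) * sigma2)))%:E)%E.

move=> z k z0 k0.
have c0 : 0 < 1 + k^-1 by rewrite addr_gt0 ?invr_gt0.
set c := 1 + k^-1 in c0 *.
set l := z / (2 * sigma2 * c).
have l0 : 0 < l by rewrite /l divr_gt0// !mulr_gt0.
have mX : measurable_fun setT X by exact: measurable_funPT.
have mY : measurable_fun setT Y by exact: measurable_funPT.
have mF : measurable_fun setT (fun x : R => expR (l * `|x|)).
  apply: measurableT_comp; first exact: measurable_expR.
  apply: measurable_funM; first exact: measurable_cst.
  exact: normr_measurable.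
have F0 : forall x : R, 0 <= expR (l * `|x|) by move=> x; exact: expR_ge0.
have hMX := mgf_abs mX hs l0 hD hX.
have hMY := mgf_abs mY hs l0 hD hY.
have hind := indep_prod hXY mF mF F0 F0.
set K := D * l * Num.sqrt (2 * pi * sigma2) * expR (l ^+ 2 * sigma2 / 2) in hMX hMY.
have mFX : measurable_fun setT (fun w => expR (l * `|X w|)) by exact: measurableT_comp mF mX.
have mFY : measurable_fun setT (fun w => expR (l * `|Y w|)) by exact: measurableT_comp mF mY.
have mS : measurable [set w | (z <= X w + Y w)%R].
  rewrite -[X in measurable X]setTI.
  have H := @measurable_fun_le _ T R setT (cst z) (fun w => X w + Y w).
  refine (H measurableT (measurable_cst _) _).
  exact: measurable_funD.
apply: (@le_trans _ _ ((\int[P]_w (expR (l * `|X w|) * expR (l * `|Y w|))%:E) * (expR (- (l * z)))%:E)%E).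
  rewrite -ge0_integralZr //; last first.
    by apply/measurable_EFinP; exact: measurable_funM.
  under eq_integral do rewrite -EFinM.
  rewrite -[X in (P X <= _)%E]setIT -integral_indic//.
  apply: ge0_le_integral => //.
  - by apply/measurable_EFinP; exact: measurable_indic.
  - apply/measurable_EFinP; apply: measurable_funM; first exact: measurable_funM.
    exact: measurable_cst.
  move=> w _; rewrite indicE lee_fin.
  have [H|H] := pselect (z <= X w + Y w).
    rewrite mem_set// -!expRD -expR0 ler_expR.
    have h1 := ler_norm (X w); have h2 := ler_norm (Y w).
    rewrite -mulrN -!mulrDr; apply: mulr_ge0; [exact: ltW|lra].
  by rewrite memNset// !mulr_ge0 ?expR_ge0.
rewrite hind.
apply: (@le_trans _ _ (((1 + K) * (1 + K))%:E * (expR (- (l * z)))%:E)%E).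
  apply: lee_pmul => //.
  - by apply: mule_ge0; apply: integral_ge0 => w _; rewrite lee_fin expR_ge0.
  - rewrite EFinM; apply: lee_pmul => //; by apply: integral_ge0 => w _; rewrite lee_fin expR_ge0.
rewrite -EFinM lee_fin.
have s0 : 0 < Num.sqrt sigma2 by rewrite sqrtr_gt0.
set s := Num.sqrt sigma2 in s0 *.
have ss : s ^+ 2 = sigma2 by rewrite /s sqr_sqrtr// ltW.
set u := l * s.
have u0 : 0 <= u by rewrite /u mulr_ge0// ltW.
have pi0 : 0 <= 2 * pi :> R by rewrite mulr_ge0// pi_ge0.
have KE : K = D * Num.sqrt (2 * pi) * u * expR (u ^+ 2 / 2).
  by rewrite /K /u [in RHS]exprMn ss sqrtrM// -/s; ring.
have hk := key_ineq k0 u0.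
set a := D * Num.sqrt (k / expR 1) * Num.sqrt (2 * pi).
have a0 : 0 <= a by rewrite /a !mulr_ge0 ?sqrtr_ge0// ltW.
set E := expR (u ^+ 2 * c / 2).
have E1 : 1 <= E.
  by rewrite /E -[leLHS]expR0 ler_expR divr_ge0// mulr_ge0 ?sqr_ge0// ltW.
have KE2 : K <= a * E.
  have -> : E = expR (u ^+ 2 / (2 * k)) * expR (u ^+ 2 / 2).
    by rewrite -expRD /E /c; congr expR; field; rewrite gt_eqF.
  rewrite KE /a.
  have -> : D * Num.sqrt (k / expR 1) * Num.sqrt (2 * pi) *
      (expR (u ^+ 2 / (2 * k)) * expR (u ^+ 2 / 2)) =
      (D * Num.sqrt (2 * pi)) * (Num.sqrt (k / expR 1) * expR (u ^+ 2 / (2 * k))) *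
      expR (u ^+ 2 / 2) by ring.
  rewrite ler_wpM2r ?expR_ge0// ler_wpM2l// mulr_ge0 ?sqrtr_ge0// ltW//.
have h1 : 1 + K <= (1 + a) * E by rewrite mulrDl mul1r lerD.
have K0 : 0 <= 1 + K.
  rewrite KE; apply: addr_ge0 => //; apply: mulr_ge0; last exact: expR_ge0.
  apply: mulr_ge0 => //; apply: mulr_ge0; [exact: ltW | exact: sqrtr_ge0].
have h2 : (1 + K) * (1 + K) <= ((1 + a) * E) ^+ 2 by rewrite expr2 ler_pM.
apply: (le_trans (ler_wpM2r (expR_ge0 _) h2)).
have a1 : 0 < (1 + a) ^+ 2 by rewrite exprn_gt0// ltr_pwDl.
rewrite exprMn -[leLHS]mulrA ler_pM2l//.
rewrite /E -expRM_natr -expRD ler_expR le_eqVlt; apply/orP; left; apply/eqP.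
rewrite /u exprMn ss /l.
have sig0 : sigma2 != 0 by rewrite gt_eqF.
have cn0 : c != 0 by rewrite gt_eqF.
by field; rewrite sig0 cn0.
Qed.
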